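(* For every $M\in[\mathbb N]$, every $\epsilon>0$ and all ordinals $\zeta<\xi<\omega_1$, there exists $N\in[M]$ such that $\|\xi_n^L\|_\zeta<\epsilon$ for all $L\in[N]$ and all $n\in\mathbb N$.
   Context: $[M]$ is the set of infinite subsets of $M$, enumerated increasingly $M=(m_n)$. For each countable ordinal $\xi$ fix successor ordinals $(\beta_n(\xi)+1)_n$: equal to $\xi$ if $\xi$ is a successor, strictly increasing to $\xi$ if $\xi$ is a limit. Schreier families: $S_0=\{\{n\}:n\in\mathbb N\}\cup\{\emptyset\}$; $S_{\zeta+1}=\{\bigcup_{i=1}^nF_i:n\le\min F_1,\ F_1<\cdots<F_n,\ F_i\in S_\zeta\}\cup\{\emptyset\}$ ($F<G$ means $\max F<\min G$); for limit $\xi$, $S_\xi=\{F:F\in S_{\beta_n(\xi)+1}\text{ for some }n\le\min F\}$. For a signed measure $\mu$ on $\mathbb N$, $\|\mu\|_\zeta=\sup\{|\mu|(F):F\in S_\zeta\}$. Repeated averages: identify $\ell_1$ with signed measures on $\mathbb N$ with unit vector basis $(e_n)$. For $\xi<\omega_1$ and $M=(m_n)\in[\mathbb N]$ define finitely supported probability measures $\xi_n^M$ by transfinite induction: $0_n^M=e_{m_n}$. If $\xi=\zeta+1$: $\xi_1^M=\frac1{m_1}\sum_{i=1}^{m_1}\zeta_i^M$; given $\xi_n^M$, let $M_n=\{m\in M:m>\max\operatorname{supp}\xi_n^M\}$, $k_n=\min M_n$, $\xi_{n+1}^M=\frac1{k_n}\sum_{i=1}^{k_n}\zeta_i^{M_n}$.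 If $\xi$ is a limit: $\xi_1^M=[\beta_{m_1}(\xi)+1]_1^M$ and $\xi_{n+1}^M=[\beta_{k_n}(\xi)+1]_1^{M_n}$ with $M_n,k_n$ as before ($[\gamma]_1^P$ is the first measure of order $\gamma$ for the set $P$). *)

(* Defs.v *)
From HB Require Import structures.
From mathcomp Require Import all_boot all_order all_algebra.
From mathcomp Require Import boolp classical_sets reals.
Set Implicit Arguments. Unset Strict Implicit. Unset Printing Implicit Defensive.
Import Order.TTheory GRing.Theory Num.Theory.
Local Open Scope ring_scope.

(* Countable ordinals.  A model of omega_1: a well-founded strict total     *)
(* order which is uncountable, all of whose proper initial segments are     *)
(* countable.  Any such structure is order-isomorphic to omega_1, i.e. its  *)
(* elements are exactly the countable ordinals.                             *)
Record omega1 := Omega1 {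
  ord :> Type;
  olt : ord -> ord -> Prop;
  olt_wf : well_founded olt;
  olt_trans : forall x y z, olt x y -> olt y z -> olt x z;
  olt_total : forall x y, olt x y \/ x = y \/ olt y x;
  olt_ctbl : forall x, exists f : nat -> ord, forall y, olt y x -> exists n, f n = y;
  ord_unctbl : ~ exists f : nat -> ord, forall y, exists n, f n = y
}.

Section Ordinals.
Variable O : omega1.

Definition is_succ_of (eta xi : O) :=
  olt eta xi /\ forall z, olt z xi -> z = eta \/ olt z eta.
Definition is_zero (xi : O) := forall z, ~ olt z xi.
Definition is_limit (xi : O) :=
  (exists z, olt z xi) /\ ~ (exists eta, is_succ_of eta xi).

(* beta xi n is beta_n(xi) for n >= 1 (the value at n = 0 is unused).
   (beta_n(xi)+1)_n is: constantly xi when xi is a successor; a strictly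
   increasing sequence converging to xi when xi is a limit. *)
Definition fundamental_seqs (beta : O -> nat -> O) :=
  forall xi : O,
    (forall eta, is_succ_of eta xi -> forall n, (0 < n)%N -> beta xi n = eta) /\
    (is_limit xi -> exists s : nat -> O,
        (forall n, (0 < n)%N -> is_succ_of (beta xi n) (s n)) /\
        (forall n, (0 < n)%N -> olt (s n) (s n.+1)) /\
        (forall n, olt (s n) xi) /\
        (forall z, olt z xi -> exists2 n, (0 < n)%N & olt z (s n))).

Variable beta : O -> nat -> O.

(* Schreier families.  A finite subset of N = {1,2,...} is represented by  *)
(* the strictly increasing list of its elements.  In the successor clause  *)
(* F = F_1 u ... u F_n with F_1 < ... < F_n nonempty blocks, which as      *)
(* lists is the concatenation of the blocks.                               *)
Inductive schreier : O -> seq nat -> Prop :=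
| sch_zero_nil z : is_zero z -> schreier z [::]
| sch_zero_single z k : is_zero z -> (0 < k)%N -> schreier z [:: k]
| sch_succ_nil z eta : is_succ_of eta z -> schreier z [::]
| sch_succ z eta (Fs : seq (seq nat)) :
    is_succ_of eta z ->
    Fs != [::] ->
    (forall G, G \in Fs -> G != [::]) ->
    (forall G, G \in Fs -> schreier eta G) ->
    sorted (fun A B => (last 0 A < head 0 B)%N) Fs ->
    (size Fs <= head 0%N (head [::] Fs))%N ->
    schreier z (flatten Fs)
| sch_limit z n gamma F :
    is_limit z -> (0 < n)%N ->
    is_succ_of (beta z n) gamma -> schreier gamma F ->
    (F = [::] \/ (n <= head 0%N F)%N) ->
    schreier z F.

Variable R : realType.

(* Finitely supported signed measures on N: mu is the list of its values *)
(* mu(0), mu(1), ..., i.e. mu({k}) = mu`_k.                              *)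
Definition meas := seq R.
Definition dirac (k : nat) : meas := rcons (nseq k 0) 1.
Definition madd (s t : meas) : meas :=
  mkseq (fun k => s`_k + t`_k) (maxn (size s) (size t)).
Definition mscale (a : R) (s : meas) : meas := map ( *%R a) s.
Definition maxsupp (mu : meas) : nat := \max_(k < size mu | mu`_k != 0) k.

Definition absmass (mu : meas) (F : seq nat) : R := \sum_(k <- F) `|mu`_k|.
Definition snorm (zeta : O) (mu : meas) : R :=
  sup [set x : R | exists F, schreier zeta F /\ x = absmass mu F].

(* Infinite subsets of N = {1,2,...} are represented by their increasing  *)
(* enumerations m : nat -> nat (m 0 = m_1, m 1 = m_2, ...).               *)
Definition incr (m : nat -> nat) := forall i, (m i < m i.+1)%N.
Definition infsubN (m : nat -> nat) := incr m /\ (0 < m 0)%N.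
Definition infsub (l m : nat -> nat) := incr l /\ forall i, exists j, l i = m j.

(* {m in M : m > b}, for M increasing (its elements <= b are among the
   first b+1 ones since m_i >= i). *)
Definition after (m : nat -> nat) (b : nat) : nat -> nat :=
  fun i => m (i + \sum_(j < b.+1) (m j <= b))%N.

(* Repeated averages.  ravg xi M n = xi_{n+1}^M (0-based index n). *)
Definition ravgT (xi : O) := (nat -> nat) -> nat -> meas.

Definition iter_first (first : (nat -> nat) -> meas) (m : nat -> nat) : nat -> meas :=
  fix it n := match n with
  | 0 => first m
  | n'.+1 => first (after m (maxsupp (it n')))
  end.

Definition ravg_body (xi : O) (rec : forall eta, olt eta xi -> ravgT eta) : ravgT xi :=
  match pselect (exists eta, is_succ_of eta xi) with
  | left h =>
      let eta := proj1_sig (cid h) in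
      let lt := proj1 (proj2_sig (cid h)) in
      iter_first (fun p => mscale ((p 0)%:R)^-1
                    (\big[madd/[::]]_(i < p 0) rec eta lt p i))
  | right _ =>
      match pselect (exists z, olt z xi) with
      | left _ =>
          iter_first (fun p =>
            match pselect (exists g, is_succ_of (beta xi (p 0)) g /\ olt g xi) with
            | left hg => let g := proj1_sig (cid hg) in
                         rec g (proj2 (proj2_sig (cid hg))) p 0
            | right _ => [::]
            end)
      | right _ => fun m n => dirac (m n)
      end
  end.

Definition ravg : forall xi : O, ravgT xi := Fix (@olt_wf O) ravgT ravg_body.

End Ordinals.

(* Main.v *)
Require Import Defs.
From HB Require Import structures.
From mathcomp Require Import all_boot all_order all_algebra.
From mathcomp Require Import boolp classical_sets reals.
From mathcomp Require Import zify ring lra.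
Import Order.TTheory GRing.Theory Num.Theory.
Set Implicit Arguments. Unset Strict Implicit. Unset Printing Implicit Defensive.
Local Open Scope ring_scope.

Definition Good P := incr P /\ (0 < P 0)%N.

Section Seqs.
Implicit Types (P L N M : nat -> nat).

Lemma incr_lt P i j : incr P -> (i < j)%N -> (P i < P j)%N.
Proof. move=> hP; exact: (homo_ltn ltn_trans hP). Qed.

Lemma incr_ltE P i j : incr P -> (P i < P j)%N = (i < j)%N.
Proof.
move=> hP; apply/idP/idP; last exact: incr_lt.
case: (ltngtP i j) => // [hji|->]; last by rewrite ltnn.
by move=> h; have := incr_lt hP hji; lia.
Qed.

Lemma incr_leE P i j : incr P -> (P i <= P j)%N = (i <= j)%N.
Proof. by move=> hP; rewrite leqNgt incr_ltE // -leqNgt. Qed.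

Lemma incr_inj P i j : incr P -> P i = P j -> i = j.
Proof.
move=> hP e; apply/eqP; rewrite eqn_leq -(incr_leE i j hP) -(incr_leE j i hP) e; lia.
Qed.

Lemma incr_geid P i : incr P -> (i <= P i)%N.
Proof. move=> hP; elim: i => // i IH; have := hP i; lia. Qed.

Definition cnt P b := (\sum_(j < b.+1) (P j <= b))%N.

Lemma afterE P b i : after P b i = P (i + cnt P b)%N.
Proof. by []. Qed.

Lemma cnt_gt P b : incr P -> (b < P (cnt P b))%N.
Proof.
move=> hP; rewrite ltnNge; apply/negP => hc.
have hcb : (cnt P b <= b)%N by have := incr_geid (cnt P b) hP; lia.
set c := cnt P b in hc hcb *.
have E : c = (\sum_(0 <= j < b.+1) (P j <= b))%N by rewrite big_mkord.
have : (c.+1 <= c)%N.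
  rewrite {2}E (@big_cat_nat _ _ _ c.+1) //=.
  have -> : (\sum_(0 <= i < c.+1) (P i <= b) = \sum_(0 <= i < c.+1) 1)%N.
    apply: eq_big_nat => j /andP [_ hj].
    by rewrite (leq_trans _ hc) // incr_leE.
  rewrite sum_nat_const_nat; lia.
lia.
Qed.

Lemma after_gt P b i : incr P -> (b < after P b i)%N.
Proof.
move=> hP; rewrite afterE; apply: (leq_trans (cnt_gt b hP)).
by rewrite incr_leE // leq_addl.
Qed.

Lemma after_incr P b : incr P -> incr (after P b).
Proof. by move=> hP i; rewrite !afterE; apply: incr_lt => //; lia. Qed.

Lemma infsub_trans L N M : infsub L N -> infsub N M -> infsub L M.
Proof.
move=> [hL hLN] [hN hNM]; split => // i.
have [j ->] := hLN i; exact: hNM.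
Qed.

Lemma infsub_refl N : incr N -> infsub N N.
Proof. by move=> hN; split => // i; exists i. Qed.

Lemma infsub_incr L N : infsub L N -> incr L.
Proof. by case. Qed.

Lemma infsub_good L N : infsub L N -> Good N -> Good L.
Proof.
move=> [hL hLN] [hN hN0]; split => //.
have [j ->] := hLN 0; apply: leq_trans hN0 _; rewrite incr_leE //.
Qed.

Lemma after_sub P b : incr P -> infsub (after P b) P.
Proof. by move=> hP; split; [exact: after_incr|move=> i; exists (i + cnt P b)%N]. Qed.

Lemma cnt_pos P b : (P 0 <= b)%N -> (0 < cnt P b)%N.
Proof. by move=> h; rewrite /cnt big_ord_recl /= h. Qed.

Lemma after_tail P b : incr P -> (P 0 <= b)%N -> infsub (after P b) (fun i => P i.+1).
Proof.
move=> hP hb; split; first exact: after_incr.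
move=> i; exists (i + cnt P b).-1; rewrite afterE; congr P.
have := cnt_pos hb; lia.
Qed.

Lemma shift_sub P k : incr P -> infsub (fun i => P (i + k)%N) P.
Proof. move=> hP; split; [move=> i; apply: incr_lt => //; lia| by move=> i; exists (i+k)%N]. Qed.

Lemma tail_sub P : incr P -> infsub (fun i => P i.+1) P.
Proof. move=> hP; split; [move=> i; exact: hP| by move=> i; exists i.+1]. Qed.

Lemma infsub_ge L N : infsub L N -> incr N -> forall i, (N i <= L i)%N.
Proof.
move=> [hL hLN] hN.
have : forall i, exists2 j, L i = N j & (i <= j)%N.
  elim=> [|i [j hj hij]]; first by have [j hj] := hLN 0; exists j.
  have [j' hj'] := hLN i.+1; exists j' => //.
  have := hL i; rewrite hj hj' incr_ltE //; lia.
move=> h i; have [j -> hij] := h i; by rewrite incr_leE.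
Qed.

Definition Large (Pr : (nat -> nat) -> Prop) :=
  forall M, Good M -> exists2 N, infsub N M & Pr N.
Definition AllSub (Phi : (nat -> nat) -> Prop) N := forall L, infsub L N -> Phi L.
Definition Dbl N := forall i, (2 * N i <= N i.+1)%N.

Lemma AllSub_hered Phi N N' : infsub N' N -> AllSub Phi N -> AllSub Phi N'.
Proof. by move=> h1 h2 L hL; apply: h2; exact: infsub_trans hL h1. Qed.

Lemma Large_fin q (Phi : nat -> (nat -> nat) -> Prop) :
  (forall n, (n < q)%N -> Large (AllSub (Phi n))) ->
  Large (AllSub (fun L => forall n, (n < q)%N -> Phi n L)).
Proof.
elim: q => [|q IH] h M hM.
  by exists M; [exact: infsub_refl (proj1 hM)| move=> L _ n].
have [N1 hN1 hP1] := IH (fun n hn => h n (ltnW hn)) M hM.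
have [N2 hN2 hP2] := h q (ltnSn q) N1 (infsub_good hN1 hM).
exists N2; first exact: infsub_trans hN2 hN1.
move=> L hL n; rewrite ltnS leq_eqVlt => /orP [/eqP ->|hn]; first exact: hP2.
by apply: (AllSub_hered hN2 hP1).
Qed.

Lemma tailN_good P : Good P -> Good (fun i => P i.+1).
Proof. move=> [hP h0]; split; [by move=> i; exact: hP| by apply: leq_trans h0 _; apply: ltnW]. Qed.

Lemma diag (Q : nat -> (nat -> nat) -> Prop) :
  (forall q N N', infsub N' N -> Q q N -> Q q N') -> (forall q, Large (Q q)) ->
  Large (fun N => forall j, Q (N j) (fun i => N (i + j.+1)%N)).
Proof.
move=> hH hL M hM.
have hc : forall x : nat * (nat -> nat), exists N, Good x.2 -> infsub N x.2 /\ Q x.1 N.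
  move=> [q P] /=; case: (pselect (Good P)) => hP.
    by have [N h1 h2] := hL q P hP; exists N.
  by exists P.
pose pick x := proj1_sig (cid (hc x)).
have hpick : forall q P, Good P -> infsub (pick (q, P)) P /\ Q q (pick (q, P)).
  by move=> q P hP; rewrite /pick; case: cid => /= N; apply.
pose T := fix T j := match j with 0 => M | j'.+1 => pick (T j' 0, fun i => T j' i.+1) end.
have hT : forall j, Good (T j) /\ infsub (T j.+1) (fun i => T j i.+1) /\ Q (T j 0) (T j.+1).
  elim=> [|j [hg [hs hq]]].
    have [h1 h2] := hpick (M 0) _ (tailN_good hM).
    by split => //; split.
  have hg' := infsub_good hs (tailN_good hg).
  have [h1 h2] := hpick (T j.+1 0) _ (tailN_good hg').
  by split => //; split.
have hsub : forall j k, infsub (T (k + j)%N) (T j).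
  move=> j; elim=> [|k IH]; first exact: infsub_refl (proj1 (proj1 (hT j))).
  have [hg [hs _]] := hT (k + j)%N.
  apply: infsub_trans IH; apply: infsub_trans hs _; exact: tail_sub (proj1 hg).
pose N j := T j 0.
have hNT : forall j i, exists t, N (i + j)%N = T j t.
  by move=> j i; have [_ h] := hsub j i; have [t ht] := h 0%N; exists t.
have hNincr : incr N.
  move=> j; rewrite /N; have [hg [[_ hs] _]] := hT j.
  have [t ->] := hs 0%N; exact: incr_lt (proj1 hg) _.
exists N.
  split => // i; have [t ->] := hNT i 0%N; have [_ h] := hsub 0%N i.
  by rewrite addn0 in h; have [t' ->] := h t; exists t'.
move=> j; apply: hH (proj2 (proj2 (hT j))).
split; first by move=> i; apply: hNincr.
move=> i; have := hNT j.+1 i; by rewrite -addSnnS.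
Qed.

Lemma exists_dbl M : Good M -> exists2 N, infsub N M & Dbl N.
Proof.
move=> [hM hM0].
pose g := fix g i := match i with 0 => 0%N | i'.+1 => (2 * M (g i')).+1 end.
have hg : forall i, (g i < g i.+1)%N.
  move=> i /=; have := incr_geid (g i) hM; lia.
exists (fun i => M (g i)).
  split; [by move=> i; apply: incr_lt | by move=> i; exists (g i)].
move=> i /=; have := incr_geid (2 * M (g i)).+1 hM; lia.
Qed.

Lemma dbl_le N j j' : incr N -> Dbl N -> (j < j')%N -> (2 * N j <= N j')%N.
Proof.
move=> hN hD hj; apply: leq_trans (hD j) _; rewrite incr_leE //.
Qed.

Lemma dbl_sub L N : infsub L N -> incr N -> Dbl N -> Dbl L.
Proof.
move=> [hL hLN] hN hD i.
have [j hj] := hLN i; have [j' hj'] := hLN i.+1.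
rewrite hj hj'; apply: dbl_le => //.
by rewrite -(incr_ltE _ _ hN) -hj -hj'.
Qed.

Lemma sub_tail P N j : infsub P N -> incr N -> P 0 = N j ->
  infsub (fun t => P t.+1) (fun t => N (t + j.+1)%N).
Proof.
move=> [hP hPN] hN e; split; first by move=> t; exact: hP.
move=> t; have [j' hj'] := hPN t.+1.
have : (N j < N j')%N by rewrite -e -hj'; apply: incr_lt => //.
rewrite incr_ltE // => hjj; exists (j' - j.+1)%N; rewrite hj'; congr N; lia.
Qed.

Lemma exists_ge M K : Good M -> exists2 N, infsub N M & forall i, (K <= N i)%N.
Proof.
move=> [hM hM0]; exists (fun i => M (i + K)%N); first exact: shift_sub.
move=> i; have := incr_geid (i + K) hM; lia.
Qed.

End Seqs.

Section Meas.
Variable R : realType.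
Implicit Types (mu s t : meas R).

Lemma nth_madd s t k : (madd s t)`_k = s`_k + t`_k.
Proof.
rewrite /madd; case: (ltnP k (maxn (size s) (size t))) => h.
  by rewrite nth_mkseq.
rewrite nth_default ?size_mkseq //.
move: h; rewrite geq_max => /andP [h1 h2].
by rewrite !nth_default // addr0.
Qed.

Lemma nth_mscale a s k : (mscale a s)`_k = a * s`_k.
Proof.
rewrite /mscale; case: (ltnP k (size s)) => h.
  by rewrite (nth_map 0).
by rewrite !nth_default ?size_map // mulr0.
Qed.

Lemma nth_bigmadd p (F : nat -> meas R) k :
  (\big[@madd R/[::]]_(i < p) F i)`_k = \sum_(i < p) (F i)`_k.
Proof.
apply: (big_rec2 (fun (m : meas R) r => m`_k = r)); first by rewrite nth_nil.
by move=> i m r _ <-; rewrite nth_madd.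
Qed.

Lemma nth_dirac j k : (dirac R j)`_k = (j == k)%:R.
Proof.
rewrite /dirac nth_rcons size_nseq nth_nseq.
case: (ltnP k j) => h /=; first by rewrite (gtn_eqF h).
case E: (k == j); last by rewrite eq_sym E.
by move/eqP: E => ->; rewrite eqxx.
Qed.

Definition vanish mu K := forall k, (K <= k)%N -> mu`_k = 0.
Definition prob mu := (forall k, 0 <= mu`_k) /\
  exists K, vanish mu K /\ \sum_(k < K) mu`_k = 1.
Definition suppin (P : nat -> nat) mu := forall k, mu`_k != 0 -> exists j, P j = k.

Lemma vanish_mono mu K K' : (K <= K')%N -> vanish mu K -> vanish mu K'.
Proof. move=> hK h k hk; apply: h; lia. Qed.

Lemma sum_vanish (f : nat -> R) K1 K2 : (K1 <= K2)%N ->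
  (forall k, (K1 <= k)%N -> f k = 0) -> \sum_(k < K2) f k = \sum_(k < K1) f k.
Proof.
move=> h hf; rewrite -!(big_mkord xpredT) (big_cat_nat (leq0n K1) h) /=.
rewrite [X in _ + X]big1_seq ?addr0 // => k /andP[_]; rewrite mem_index_iota => /andP[hk _].
exact: hf.
Qed.

Lemma prob_dirac j : prob (dirac R j).
Proof.
split; first by move=> k; rewrite nth_dirac ler0n.
exists j.+1; split.
  by move=> k hk; rewrite nth_dirac; have -> : (j == k) = false by apply/eqP; lia.
rewrite big_ord_recr /= nth_dirac eqxx big1 ?add0r // => i _.
by rewrite nth_dirac (gtn_eqF (ltn_ord i)).
Qed.

Lemma sum_count (g : nat -> R) K (F : seq nat) : (forall k, (K <= k)%N -> g k = 0) ->
  \sum_(k <- F) g k = \sum_(j < K) g j * (count_mem (j : nat) F)%:R.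
Proof.
move=> hg; elim: F => [|a F IH].
  by rewrite big_nil big1 // => j _; rewrite mulr0.
rewrite big_cons IH /=.
have -> : \sum_(j < K) g j * ((a == j) + count_mem (j : nat) F)%:R =
          \sum_(j < K) g j * (a == j)%:R + \sum_(j < K) g j * (count_mem (j : nat) F)%:R.
  by rewrite -big_split /=; apply: eq_bigr => j _; rewrite natrD mulrDr.
congr (_ + _).
case: (ltnP a K) => ha.
  rewrite (bigD1 (Ordinal ha)) //= eqxx mulr1 big1 ?addr0 // => j hj.
  have -> : (a == j) = false.
    by apply/negbTE; apply: contra hj => /eqP e; apply/eqP; apply: val_inj => /=.
  by rewrite mulr0.
rewrite hg // big1 // => j _.
have -> : (a == j) = false by apply/eqP => e; have := ltn_ord j; lia.
by rewrite mulr0.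
Qed.

Lemma sum_uniq_le (g : nat -> R) K (F : seq nat) : (forall k, 0 <= g k) ->
  (forall k, (K <= k)%N -> g k = 0) -> uniq F ->
  \sum_(k <- F) g k <= \sum_(k < K) g k.
Proof.
move=> g0 hg hF; rewrite (sum_count _ hg); apply: ler_sum => j _.
rewrite count_uniq_mem //; case: ((j : nat) \in F) => /=; first by rewrite mulr1.
by rewrite mulr0.
Qed.

Lemma absmass_le1 mu F : prob mu -> uniq F -> absmass mu F <= 1.
Proof.
move=> [h0 [K [hv hs]]] hF; rewrite /absmass.
rewrite (eq_bigr (fun k => mu`_k)); last by move=> k _; rewrite ger0_norm.
by rewrite -hs; apply: sum_uniq_le.
Qed.

Lemma absmass_ge0 mu F : 0 <= absmass mu F.
Proof. by apply: sumr_ge0 => k _. Qed.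

Lemma absmass_madd s t F : absmass (madd s t) F <= absmass s F + absmass t F.
Proof.
rewrite /absmass -big_split /=; apply: ler_sum => k _; rewrite nth_madd.
exact: ler_normD.
Qed.

Lemma absmass_mscale a s F : absmass (mscale a s) F = `|a| * absmass s F.
Proof.
by rewrite /absmass mulr_sumr; apply: eq_bigr => k _; rewrite nth_mscale normrM.
Qed.

Lemma absmass_big p (G : nat -> meas R) F :
  absmass (\big[@madd R/[::]]_(i < p) G i) F <= \sum_(i < p) absmass (G i) F.
Proof.
rewrite /absmass exchange_big /=; apply: ler_sum => k _.
rewrite nth_bigmadd; exact: ler_norm_sum.
Qed.

Lemma absmass_avg p (G : nat -> meas R) F : (0 < p)%N ->
  absmass (mscale (p%:R)^-1 (\big[@madd R/[::]]_(i < p) G i)) F <=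
  (p%:R)^-1 * \sum_(i < p) absmass (G i) F.
Proof.
move=> hp; rewrite absmass_mscale ger0_norm ?invr_ge0 ?ler0n //.
apply: ler_wpM2l; first by rewrite invr_ge0 ler0n.
exact: absmass_big.
Qed.

Lemma absmass_flatten mu (Fs : seq (seq nat)) :
  absmass mu (flatten Fs) = \sum_(G <- Fs) absmass mu G.
Proof. by rewrite /absmass big_flatten. Qed.

Lemma absmass_zero mu F : (forall k, k \in F -> mu`_k = 0) -> absmass mu F = 0.
Proof. by move=> h; rewrite /absmass big_seq big1 // => k /h ->; rewrite normr0. Qed.

Lemma le_maxsupp mu k : mu`_k != 0 -> (k <= maxsupp mu)%N.
Proof.
move=> hk; case: (ltnP k (size mu)) => h.
  by rewrite /maxsupp; apply: (@leq_bigmax_cond _ _ (fun i : 'I_(size mu) => (i : nat)) (Ordinal h)).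
by rewrite nth_default ?eqxx in hk.
Qed.

Lemma prob_nz mu : prob mu -> exists k, mu`_k != 0.
Proof.
move=> [_ [K [_ hs]]]; apply/not_existsP => h.
have : \sum_(k < K) mu`_k = 0 by apply: big1 => k _; apply/eqP/negPn/negP/h.
by rewrite hs => /eqP; rewrite oner_eq0.
Qed.

Lemma prob_sumK mu K : prob mu -> vanish mu K -> \sum_(k < K) mu`_k = 1.
Proof.
move=> [_ [K' [hv' hs']]] hv.
rewrite -(@sum_vanish _ K (maxn K K')) ?leq_maxl //.
by rewrite (@sum_vanish _ K' (maxn K K')) ?leq_maxr.
Qed.

Lemma common_vanish p (G : nat -> meas R) : (forall i, (i < p)%N -> prob (G i)) ->
  exists K, forall i, (i < p)%N -> vanish (G i) K.
Proof.
elim: p => [|p IH] hG; first by exists 0%N.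
have [K1 hK1] : exists K, forall i, (i < p)%N -> vanish (G i) K.
  by apply: IH => i hi; apply: hG; lia.
have [_ [K2 [hv2 _]]] := hG p (ltnSn p).
exists (maxn K1 K2) => i; rewrite ltnS leq_eqVlt => /orP[/eqP ->|hi].
  by apply: vanish_mono hv2; rewrite leq_maxr.
by apply: vanish_mono (hK1 _ hi); rewrite leq_maxl.
Qed.

Lemma prob_avg p (G : nat -> meas R) : (0 < p)%N -> (forall i, (i < p)%N -> prob (G i)) ->
  prob (mscale (p%:R)^-1 (\big[@madd R/[::]]_(i < p) G i)).
Proof.
move=> hp hG; split.
  move=> k; rewrite nth_mscale nth_bigmadd; apply: mulr_ge0; first by rewrite invr_ge0 ler0n.
  by apply: sumr_ge0 => i _; have [h _] := hG i (ltn_ord i); exact: h.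
have [K hK] := common_vanish hG.
exists K; split.
  move=> k hk; rewrite nth_mscale nth_bigmadd big1 ?mulr0 // => i _.
  exact: (hK i (ltn_ord i)).
rewrite (eq_bigr (fun k : 'I_K => (p%:R)^-1 * \sum_(i < p) (G i)`_k)); last first.
  by move=> k _; rewrite nth_mscale nth_bigmadd.
rewrite -mulr_sumr exchange_big /=.
rewrite (eq_bigr (fun _ => 1)); last by move=> i _; apply: prob_sumK; [apply: hG|apply: hK].
rewrite sumr_const card_ord mulVf //; by rewrite pnatr_eq0 -lt0n.
Qed.

Lemma suppin_avg P p (G : nat -> meas R) : (forall i, (i < p)%N -> suppin P (G i)) ->
  suppin P (mscale (p%:R)^-1 (\big[@madd R/[::]]_(i < p) G i)).
Proof.
move=> hG k; rewrite nth_mscale nth_bigmadd => hk.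
case: (pselect (exists i : 'I_p, (G i)`_k != 0)) => [[i hi]|hn].
  exact: (hG i (ltn_ord i) k hi).
exfalso; move: hk; rewrite big1 ?mulr0 ?eqxx // => i _.
by apply/eqP/negPn/negP => h; apply: hn; exists i.
Qed.

Lemma suppin_sub P Q mu : infsub Q P -> suppin Q mu -> suppin P mu.
Proof. move=> [_ hQP] h k /h [j <-]; have [j' ->] := hQP j; by exists j'. Qed.

Lemma inv_le (a b : R) : 0 < a -> a <= b -> b^-1 <= a^-1.
Proof. move=> ha hab; rewrite lef_pV2 ?posrE //; exact: (lt_le_trans ha hab). Qed.

Lemma inv2_le (a b : R) : 0 < a -> 2 * a <= b -> 2 * b^-1 <= a^-1.
Proof.
move=> ha hab.
have h2 : 0 < 2 * a by rewrite mulr_gt0.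
have := inv_le h2 hab; rewrite invfM => h.
have : 2 * b^-1 <= 2 * (2^-1 * a^-1) by rewrite ler_pM2l.
by rewrite mulrA mulfV ?mul1r // pnatr_eq0.
Qed.

Lemma geom_sum m (q : nat -> R) (x : R) : 0 < x -> (forall i, 0 < q i) ->
  (forall i, 2 * q i <= q i.+1) ->
  \sum_(i < m) (if x < q i then (q i)^-1 else 0) <= 2 / x.
Proof.
move=> hx hq hd.
suff : \sum_(i < m) (if x < q i then (q i)^-1 else 0) +
       (if x < q m then 2 / q m else 2 / x) <= 2 / x.
  by move=> h; apply: le_trans h; rewrite lerDl; case: ifP => _;
     apply: divr_ge0 => //; apply: ltW.
elim: m => [|m IH].
  rewrite big_ord0 add0r; case: ifP => h //.
  by rewrite ler_pM2l // inv_le // ltW.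
rewrite big_ord_recr /=.
case: ifP => hm; case: ifP => hm1.
- have := inv2_le (hq m) (hd m); move: IH; rewrite hm; lra.
- by have := hd m; have := hq m; move/negbT: hm1; rewrite -leNgt; lra.
- move: IH; rewrite hm => IH.
  have : 2 / q m.+1 <= 2 / x by rewrite ler_pM2l // inv_le // ltW.
  lra.
- by move: IH; rewrite hm; lra.
Qed.

Lemma sum_le1 m (f : nat -> R) : (forall i, (i < m)%N -> 0 <= f i <= 1) ->
  (forall i j, (i < m)%N -> (j < m)%N -> f i != 0 -> f j != 0 -> i = j) ->
  \sum_(i < m) f i <= 1.
Proof.
move=> h1 h2.
case: (pselect (exists i : 'I_m, f i != 0)) => [[i hi]|hn].
  rewrite (bigD1 i) //= big1 ?addr0; first by have /andP[] := h1 i (ltn_ord i).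
  move=> j hj; case: (eqVneq (f j) 0) => // hfj; exfalso.
  have e := h2 _ _ (ltn_ord j) (ltn_ord i) hfj hi.
  by move: hj; rewrite (_ : j = i) ?eqxx //; apply: val_inj.
by rewrite big1 ?ler01 // => i _; apply/eqP/negPn/negP => hi; apply: hn; exists i.
Qed.

End Meas.

Section Aux.
Variable O : omega1.
Variable beta : O -> nat -> O.
Hypothesis hbeta : fundamental_seqs beta.
Variable R : realType.

Implicit Types (x y z xi eta zeta : O).

Lemma olt_irr x : ~ olt x x.
Proof.
elim: (olt_wf x) => {}x _ IH hx; exact: (IH x hx hx).
Qed.

Lemma olt_asym x y : olt x y -> olt y x -> False.
Proof. move=> h1 h2; exact: (olt_irr (olt_trans h1 h2)). Qed.

Lemma pred_unique a b z : is_succ_of a z -> is_succ_of b z -> a = b.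
Proof.
move=> [ha1 ha2] [hb1 hb2].
case: (ha2 _ hb1) => // hba; case: (hb2 _ ha1) => // hab.
by case: (olt_asym hab hba).
Qed.

Lemma succ_unique a z z' : is_succ_of a z -> is_succ_of a z' -> z = z'.
Proof.
move=> [h1 h2] [h1' h2'].
case: (olt_total z z') => [hl|[//|hl]].
- case: (h2' _ hl) => [e|hl2]; first by rewrite e in h1; case: (olt_irr h1).
  by case: (olt_asym h1 hl2).
- case: (h2 _ hl) => [e|hl2]; first by rewrite e in h1'; case: (olt_irr h1').
  by case: (olt_asym h1' hl2).
Qed.

Lemma zero_not_succ a z : is_zero z -> is_succ_of a z -> False.
Proof. by move=> hz [h _]; exact: (hz _ h). Qed.

Lemma zero_not_limit z : is_zero z -> is_limit z -> False.
Proof. by move=> hz [[w hw] _]; exact: (hz _ hw). Qed.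

Lemma succ_not_limit a z : is_succ_of a z -> is_limit z -> False.
Proof. by move=> hs [_ hn]; apply: hn; exists a. Qed.

Lemma ord_cases z : [\/ is_zero z, (exists a, is_succ_of a z) | is_limit z].
Proof.
case: (pselect (exists a, is_succ_of a z)) => hs; first by apply: Or32.
case: (pselect (exists w, olt w z)) => hw.
  by apply: Or33; split.
by apply: Or31 => w hlt; apply: hw; exists w.
Qed.

Lemma lim_seq xi : is_limit xi -> exists s : nat -> O,
        [/\ (forall n, (0 < n)%N -> is_succ_of (beta xi n) (s n)),
        (forall n m, (0 < n)%N -> (n < m)%N -> olt (s n) (s m)),
        (forall n, olt (s n) xi) &
        (forall z, olt z xi -> exists2 n, (0 < n)%N & olt z (s n))].
Proof.
move=> hl; have [_ /(_ hl) [s [h1 [h2 [h3 h4]]]]] := hbeta xi.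
exists s; split => //.
move=> n m hn; elim: m => // m IH; rewrite ltnS leq_eqVlt => /orP[/eqP <-|hnm].
  exact: h2.
apply: olt_trans (IH hnm) (h2 _ _); lia.
Qed.

Notation ravg := (ravg beta R).

Lemma ravg_eq xi : ravg xi = ravg_body beta (fun eta _ => ravg eta).
Proof.
rewrite /ravg Fix_eq //.
move=> x f g H.
have -> : f = g by apply: functional_extensionality_dep => y;
  apply: functional_extensionality_dep => p; exact: H.
by [].
Qed.

Lemma ravg_zero xi P n : is_zero xi -> ravg xi P n = dirac R (P n).
Proof.
move=> hz; rewrite ravg_eq /ravg_body.
case: pselect => [[a ha]|_]; first by case: (zero_not_succ hz ha).
case: pselect => [[w hw]|_] //; by case: (hz _ hw).
Qed.

Definition avgF eta (p : nat -> nat) : meas R :=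
  mscale ((p 0)%:R)^-1 (\big[@madd R/[::]]_(i < p 0) ravg eta p i).

Lemma ravg_succ xi eta : is_succ_of eta xi -> ravg xi = iter_first (avgF eta).
Proof.
move=> hs; rewrite ravg_eq /ravg_body.
case: pselect => [h|hn]; last by case: hn; exists eta.
case: (cid h) => /= e he.
by rewrite (pred_unique he hs).
Qed.

Definition limF xi (p : nat -> nat) : meas R :=
  match pselect (exists g, is_succ_of (beta xi (p 0)) g /\ olt g xi) with
  | left hg => ravg (proj1_sig (cid hg)) p 0
  | right _ => [::]
  end.

Lemma ravg_lim xi : is_limit xi -> ravg xi = iter_first (limF xi).
Proof.
move=> hl; rewrite ravg_eq /ravg_body.
case: pselect => [[a ha]|_]; first by case: (succ_not_limit ha hl).
case: pselect => [_|hn]; last by case: hn; case: hl.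
by [].
Qed.

Lemma limF_eq xi P g : is_limit xi -> (0 < P 0)%N ->
  is_succ_of (beta xi (P 0)) g -> limF xi P = ravg g P 0.
Proof.
move=> hl hP hg; rewrite /limF.
case: pselect => [h|hn].
  case: (cid h) => /= g' [hg' _]; by rewrite (succ_unique hg' hg).
exfalso; apply: hn; exists g; split => //.
have [s [s1 _ s3 _]] := lim_seq hl.
by rewrite (succ_unique hg (s1 _ hP)).
Qed.

Definition A xi P := ravg xi P 0.

Lemma A_succ xi eta P : is_succ_of eta xi -> A xi P = avgF eta P.
Proof. by move=> hs; rewrite /A (ravg_succ hs). Qed.

Lemma A_lim xi P g : is_limit xi -> (0 < P 0)%N ->
  is_succ_of (beta xi (P 0)) g -> A xi P = A g P.
Proof. by move=> hl hP hg; rewrite /A (ravg_lim hl) /= (limF_eq hl hP hg). Qed.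

Lemma ravgS xi P n : ~ is_zero xi ->
  ravg xi P n.+1 = A xi (after P (maxsupp (ravg xi P n))).
Proof.
move=> hnz; case: (ord_cases xi) => [//|[eta hs]|hl].
- by rewrite /A (ravg_succ hs).
- by rewrite /A (ravg_lim hl).
Qed.

Lemma RA eta P i : incr P -> exists Q, infsub Q P /\ ravg eta P i = A eta Q.
Proof.
move=> hP; case: (pselect (is_zero eta)) => hz.
  exists (fun j => P (j + i)%N); split; first exact: shift_sub.
  by rewrite /A !ravg_zero.
case: i => [|i]; first by exists P; split => //; exact: infsub_refl.
exists (after P (maxsupp (ravg eta P i))); split; first exact: after_sub.
exact: ravgS.
Qed.

Lemma A_facts xi P : Good P -> prob (A xi P) /\ suppin P (A xi P).
Proof.
elim: (olt_wf xi) P => {}xi _ IH P hP.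
case: (ord_cases xi) => [hz|[eta hs]|hl].
- rewrite /A ravg_zero //; split; first exact: prob_dirac.
  move=> k; rewrite nth_dirac; case E: (P 0 == k); last by rewrite eqxx.
  by move/eqP: E => <- _; exists 0%N.
- have hlt : olt eta xi by case: hs.
  rewrite (A_succ _ hs) /avgF.
  have hi : forall i, (i < P 0)%N -> prob (ravg eta P i) /\ suppin P (ravg eta P i).
    move=> i _; have [Q [hQ ->]] := RA eta i (proj1 hP).
    have [h1 h2] := IH eta hlt Q (infsub_good hQ hP).
    by split => //; apply: suppin_sub h2.
  split; first by apply: prob_avg; [exact: (proj2 hP)| move=> i /hi []].
  by apply: suppin_avg => i /hi [].
- have [s [s1 _ s3 _]] := lim_seq hl.
  rewrite (A_lim hl (proj2 hP) (s1 _ (proj2 hP))).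
  exact: IH.
Qed.

Lemma ravg_facts eta P i : Good P -> prob (ravg eta P i) /\ suppin P (ravg eta P i).
Proof.
move=> hP; have [Q [hQ ->]] := RA eta i (proj1 hP).
have [h1 h2] := A_facts eta (infsub_good hQ hP).
by split => //; apply: suppin_sub h2.
Qed.

Lemma maxsupp_ge eta P i : Good P -> (P 0 <= maxsupp (ravg eta P i))%N.
Proof.
move=> hP; have [h1 h2] := ravg_facts eta i hP.
have [k hk] := prob_nz h1.
apply: leq_trans (le_maxsupp hk); have [j <-] := h2 k hk.
by rewrite incr_leE //; case: hP.
Qed.

Lemma RA_tail eta P i : ~ is_zero eta -> Good P ->
  exists Q, infsub Q (fun j => P j.+1) /\ ravg eta P i.+1 = A eta Q.
Proof.
move=> hz hP; exists (after P (maxsupp (ravg eta P i))); split.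
  apply: after_tail; [by case: hP| exact: maxsupp_ge].
exact: ravgS.
Qed.

Lemma sorted_cat_lt (G X : seq nat) : G != [::] -> sorted ltn G -> sorted ltn X ->
  (X = [::] \/ (last 0 G < head 0 X)%N) -> sorted ltn (G ++ X).
Proof.
case: G => [//|g G'] _ /= hG hX hlt.
rewrite cat_path hG /=; case: X hX hlt => [|x X'] //= hX [//|hlt].
by rewrite hlt hX.
Qed.

Lemma sorted_flatten (Fs : seq (seq nat)) : (forall G, G \in Fs -> G != [::]) ->
  (forall G, G \in Fs -> sorted ltn G) ->
  sorted (fun A B => (last 0 A < head 0 B)%N) Fs -> sorted ltn (flatten Fs).
Proof.
elim: Fs => [//|G Fs IH] hne hs hsort /=.
have hsort' : sorted (fun A B => (last 0 A < head 0 B)%N) Fs by move: hsort => /= /path_sorted.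
apply: sorted_cat_lt; [by apply: hne; rewrite inE eqxx| by apply: hs; rewrite inE eqxx| |].
  apply: IH => // H hH; [apply: hne|apply: hs]; by rewrite inE hH orbT.
move: hne hsort; clear IH hs hsort'.
case: Fs => [|H1 Fs1] hne1 /=; first by left.
move=> /andP [hlt _]; right.
have : H1 != [::] by apply: hne1; rewrite !inE eqxx orbT.
by case: H1 hlt {hne1}.
Qed.

Lemma sch_sorted z F : schreier beta z F -> sorted ltn F.
Proof.
elim => //.
- move=> {}z eta Fs _ _ hne _ IH hsort _; exact: sorted_flatten.
Qed.

Lemma sch_uniq z F : schreier beta z F -> uniq F.
Proof. by move/sch_sorted; apply: sorted_uniq; [exact: ltn_trans| exact: ltnn]. Qed.

Lemma sorted_head_le (F : seq nat) k : sorted ltn F -> k \in F -> (head 0 F <= k)%N.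
Proof.
case: F => [//|a F] /= hs; rewrite inE => /orP [/eqP ->//|hk].
have := order_path_min ltn_trans hs => /allP /(_ _ hk); lia.
Qed.

Lemma sch_nil z : schreier beta z [::].
Proof.
case: (ord_cases z) => [hz|[a ha]|hl].
- exact: sch_zero_nil.
- exact: (sch_succ_nil beta ha).
- have [s [s1 _ _ _]] := lim_seq hl.
  apply: (@sch_limit _ _ z 1 (s 1%N) [::] hl isT (s1 1%N isT)); last by left.
  exact: (sch_succ_nil beta (s1 1%N isT)).
Qed.

Lemma inv_zero z F : is_zero z -> schreier beta z F -> F = [::] \/ exists k, F = [:: k].
Proof.
move=> hz H; case: H hz.
- by move=> z' _ _; left.
- by move=> z' k _ _ _; right; exists k.
- by move=> z' eta _ _; left.
- by move=> z' eta Fs hs _ _ _ _ _ hz'; case: (zero_not_succ hz' hs).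
- by move=> z' n g F' hl _ _ _ _ hz'; case: (zero_not_limit hz' hl).
Qed.

Lemma inv_succ eta z F : is_succ_of eta z -> schreier beta z F ->
  F = [::] \/ exists Fs, [/\ F = flatten Fs, Fs != [::],
    (forall G, G \in Fs -> G != [::]), (forall G, G \in Fs -> schreier beta eta G) &
    (size Fs <= head 0 (head [::] Fs))%N].
Proof.
move=> hs H; case: H hs.
- by move=> z' hz' hs; case: (zero_not_succ hz' hs).
- by move=> z' k hz' _ hs; case: (zero_not_succ hz' hs).
- by move=> z' e _ _; left.
- move=> z' e Fs he hne hne' hsch _ hsize hs; right; exists Fs; split => //.
  by rewrite (pred_unique hs he).
- by move=> z' n g F' hl _ _ _ _ hs; case: (succ_not_limit hs hl).
Qed.

Lemma inv_lim z F : is_limit z -> schreier beta z F ->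
  F = [::] \/ exists n g, [/\ (0 < n)%N, is_succ_of (beta z n) g, schreier beta g F &
    (n <= head 0 F)%N].
Proof.
move=> hl H; case: H hl.
- by move=> z' hz' hl; case: (zero_not_limit hz' hl).
- by move=> z' k hz' _ hl; case: (zero_not_limit hz' hl).
- by move=> z' e hs hl; case: (succ_not_limit hs hl).
- by move=> z' e Fs hs _ _ _ _ _ hl; case: (succ_not_limit hs hl).
- move=> z' n g F' _ hn hg hF [->|hh] _; first by left.
  by right; exists n, g.
Qed.

Lemma snorm_le zeta (mu : meas R) c : (forall F, schreier beta zeta F -> absmass mu F <= c) ->
  snorm beta zeta mu <= c.
Proof.
move=> h; apply: ge_sup.
  by exists (absmass mu [::]), [::]; split => //; exact: sch_nil.
by move=> x [F [hF ->]]; apply: h.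
Qed.

Lemma absmass_sch_le1 z F (mu : meas R) : prob mu -> schreier beta z F -> absmass mu F <= 1.
Proof. by move=> hp /sch_uniq hu; apply: absmass_le1. Qed.

Definition PhiT zeta xi (eps : R) L :=
  forall F, schreier beta zeta F -> absmass (A xi L) F <= eps.
Definition PhiB g (C : R) L :=
  forall F, schreier beta g F -> forall m, \sum_(i < m) absmass (ravg g L i) F <= C.
Definition Tprop xi := forall zeta, olt zeta xi -> forall eps : R, 0 < eps ->
  Large (AllSub (PhiT zeta xi eps)).
Definition Bprop g := exists2 C : R, 0 <= C & Large (AllSub (PhiB g C)).

Lemma B_zero g : is_zero g -> Bprop g.
Proof.
move=> hz; exists 1 => //; move=> M hM; exists M; first exact: infsub_refl (proj1 hM).
move=> L [hL _] F hF m.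
case: (inv_zero hz hF) => [->|[k ->]].
  by rewrite big1 ?ler01 // => i _; rewrite /absmass big_nil.
apply: (@sum_le1 R m (fun i => absmass (ravg g L i) [:: k])) => [i _|i j _ _].
  by rewrite /absmass big_seq1 ravg_zero // nth_dirac; case: (L i == k); rewrite ?mulr0n ?mulr1n ?normr1 ?normr0 ?ler01 ?lexx.
rewrite /absmass !big_seq1 !ravg_zero // !nth_dirac.
case Ei: (L i == k); last by rewrite normr0 eqxx.
case Ej: (L j == k); last by rewrite normr0 eqxx.
by move=> _ _; apply: (incr_inj hL); rewrite (eqP Ei) (eqP Ej).
Qed.

Definition Lb g L i := if i is i'.+1 then after L (maxsupp (ravg g L i')) else L.

Lemma Lb_sub g L i : incr L -> infsub (Lb g L i) L.
Proof. by case: i => [|i] hL /=; [exact: infsub_refl| exact: after_sub]. Qed.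

Lemma ravg_Lb g L i : ~ is_zero g -> ravg g L i = A g (Lb g L i).
Proof. by case: i => [|i] hz //=; rewrite ravgS. Qed.

Lemma Lb_supp g L i k : ~ is_zero g -> Good L -> (ravg g L i)`_k != 0 ->
  (Lb g L i 0 <= k)%N /\ (k < Lb g L i.+1 0)%N.
Proof.
move=> hz hL hk; split.
  have [_ hs] := A_facts g (infsub_good (Lb_sub g i (proj1 hL)) hL).
  move: hk; rewrite ravg_Lb // => /hs [j <-].
  by rewrite incr_leE //; exact: infsub_incr (Lb_sub g i (proj1 hL)).
apply: leq_ltn_trans (le_maxsupp hk) _; exact: after_gt (proj1 hL).
Qed.

Lemma Lb_incr g L : ~ is_zero g -> Good L -> incr (fun i => Lb g L i 0).
Proof.
move=> hz hL i; have [hp _] := ravg_facts g i hL.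
have [k hk] := prob_nz hp; have [h1 h2] := Lb_supp hz hL hk; lia.
Qed.

Lemma Lb_inL g L i : incr L -> exists j, Lb g L i 0 = L j.
Proof. by move=> hL; have [_ h] := Lb_sub g i hL; exact: h. Qed.

Lemma split_sum m (a : nat -> R) (P : nat -> bool) :
  \sum_(i < m) a i = \sum_(i < m) (if P i then a i else 0) + \sum_(i < m) (if P i then 0 else a i).
Proof. by rewrite -big_split; apply: eq_bigr => i _; case: (P i); rewrite /= ?addr0 ?add0r. Qed.

Lemma part1 g L F (x : nat) m : ~ is_zero g -> Good L -> uniq F -> (forall k, k \in F -> (x <= k)%N) ->
  \sum_(i < m) (if (Lb g L i 0 <= x)%N then absmass (ravg g L i) F else 0) <= 1.
Proof.
move=> hz hL hF hx.
have hp := Lb_incr hz hL.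
have hzero : forall i, (Lb g L i.+1 0 <= x)%N -> absmass (ravg g L i) F = 0.
  move=> i hi; apply: absmass_zero => k hk; apply/eqP/negPn/negP => hnz.
  have [_ h2] := Lb_supp hz hL hnz; have := hx k hk; lia.
apply: (@sum_le1 R m (fun i => if (Lb g L i 0 <= x)%N then absmass (ravg g L i) F else 0)) => [i _|i j _ _].
  case: ifP => _; last by rewrite lexx ler01.
  have [hpr _] := ravg_facts g i hL.
  by rewrite absmass_ge0 absmass_le1.
case: ifP => hi; last by rewrite eqxx.
case: ifP => hj; last by rewrite eqxx.
move=> hai haj.
have hi1 : (x < Lb g L i.+1 0)%N by rewrite ltnNge; apply/negP => h; move: hai; rewrite hzero // eqxx.
have hj1 : (x < Lb g L j.+1 0)%N by rewrite ltnNge; apply/negP => h; move: haj; rewrite hzero // eqxx.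
case: (ltngtP i j) => // hij.
  have := incr_leE i.+1 j hp; rewrite hij => h; lia.
have := incr_leE j.+1 i hp; rewrite hij => h; lia.
Qed.

Lemma sum_const_seq (T : Type) (s : seq T) (c : R) : \sum_(G <- s) c = (size s)%:R * c.
Proof. elim: s => [|a s IH]; first by rewrite big_nil mul0r. by rewrite big_cons IH /= mulrSr mulrDl mul1r addrC. Qed.

Lemma head_flatten (Fs : seq (seq nat)) : Fs != [::] -> (forall G, G \in Fs -> G != [::]) ->
  head 0%N (flatten Fs) = head 0%N (head [::] Fs).
Proof.
case: Fs => [//|G Fs] _ h /=; have := h G (mem_head G Fs); clear h.
by case: G.
Qed.

Lemma Lb_good g L i : Good L -> Good (Lb g L i).
Proof. move=> hL; exact: infsub_good (Lb_sub g i (proj1 hL)) hL. Qed.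

Lemma Lb_dbl g L i : ~ is_zero g -> Good L -> Dbl L ->
  2 * (Lb g L i 0)%:R <= (Lb g L i.+1 0)%:R :> R.
Proof.
move=> hz hL hD.
have [j hj] := Lb_inL g i (proj1 hL); have [j' hj'] := Lb_inL g i.+1 (proj1 hL).
have hlt := Lb_incr hz hL i; rewrite /= in hlt.
rewrite -natrM ler_nat hj hj'; apply: dbl_le => //; first by case: hL.
by rewrite -(incr_ltE _ _ (proj1 hL)) -hj -hj'.
Qed.

Lemma part2_geom g L (x : nat) m (c : R) (a : nat -> R) : ~ is_zero g -> Good L -> Dbl L ->
  (0 < x)%N -> 0 <= c ->
  (forall i, (x < Lb g L i 0)%N -> a i <= c / (Lb g L i 0)%:R) ->
  \sum_(i < m) (if (Lb g L i 0 <= x)%N then 0 else a i) <= 2 * c / x%:R.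
Proof.
move=> hz hL hD hx hc ha.
apply: le_trans (_ : \sum_(i < m) c * (if x%:R < (Lb g L i 0)%:R then ((Lb g L i 0)%:R)^-1 else 0) <= _).
  apply: ler_sum => i _; rewrite ltr_nat; case: leqP => h; first by rewrite mulr0.
  exact: ha.
rewrite -mulr_sumr.
have hq : forall i, 0 < (Lb g L i 0)%:R :> R by move=> i; rewrite ltr0n; case: (Lb_good g i hL).
have := @geom_sum R m (fun i => (Lb g L i 0)%:R) x%:R.
rewrite ltr0n => /(_ hx hq (fun i => Lb_dbl i hz hL hD)) h.
apply: le_trans (ler_wpM2l hc h) _.
by rewrite mulrA (mulrC c).
Qed.

Lemma B_succ g d : is_succ_of d g -> Bprop d -> Bprop g.
Proof.
move=> hs [Cd hCd hLd]; exists (1 + 2 * Cd); first by rewrite addr_ge0 ?mulr_ge0.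
move=> M hM; have [M1 hM1 hD1] := exists_dbl hM.
have hGM1 := infsub_good hM1 hM.
have [N hN hPN] := hLd M1 hGM1.
exists N; first exact: infsub_trans hN hM1.
move=> L hLN F hF m.
have hGN := infsub_good hN hGM1.
have hL := infsub_good hLN hGN.
have hDL : Dbl L by apply: dbl_sub hLN (proj1 hGN) (dbl_sub hN (proj1 hGM1) hD1).
have hz : ~ is_zero g by move=> h; exact: zero_not_succ h hs.
case: (inv_succ hs hF) => [hF0|[Fs [hFe hne hne' hsch hsize]]].
  rewrite hF0 big1 ?addr_ge0 ?mulr_ge0 // => i _; by rewrite /absmass big_nil.
set x := head 0%N F.
have hx : forall k, k \in F -> (x <= k)%N by move=> k; apply: sorted_head_le; exact: sch_sorted hF.
have hxs : (size Fs <= x)%N by rewrite /x hFe head_flatten.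
have hx0 : (0 < x)%N.
  apply: leq_trans hxs; move: hne; clear; by case: Fs.
rewrite (split_sum m (fun i => absmass (ravg g L i) F) (fun i => (Lb g L i 0 <= x)%N)).
apply: lerD; first exact: part1 (sch_uniq hF) hx.
have -> : 2 * Cd = 2 * (Cd * x%:R) / x%:R by rewrite -mulrA mulfK // pnatr_eq0 -lt0n.
apply: (@part2_geom g L x m _ (fun i => absmass (ravg g L i) F)) => //; first by rewrite mulr_ge0.
move=> i hi; rewrite ravg_Lb // (A_succ _ hs) /avgF.
have hGi := Lb_good g i hL.
apply: le_trans (absmass_avg _ _ (proj2 hGi)) _.
rewrite mulrC ler_pM2r ?invr_gt0 ?ltr0n; last by case: hGi.
rewrite hFe.
rewrite (eq_bigr (fun t : 'I_(Lb g L i 0) => \sum_(G <- Fs) absmass (ravg d (Lb g L i) t) G));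
  last by move=> t _; rewrite absmass_flatten.
rewrite exchange_big /=.
apply: le_trans (_ : \sum_(G <- Fs) Cd <= _).
  rewrite !big_seq; apply: ler_sum => G hG; apply: (hPN (Lb g L i)).
    exact: infsub_trans (Lb_sub g i (proj1 hL)) hLN.
  exact: hsch.
by rewrite sum_const_seq mulrC ler_wpM2l // ler_nat.
Qed.

Lemma first_bound b z P (e : R) : ~ is_zero b -> Good P -> 0 <= e ->
  (forall Q, infsub Q (fun i => P i.+1) -> forall F, schreier beta z F -> absmass (A b Q) F <= e) ->
  forall F, schreier beta z F -> absmass (avgF b P) F <= ((P 0)%:R)^-1 + e.
Proof.
move=> hz hP he hQ F hF; rewrite /avgF.
apply: le_trans (absmass_avg _ _ (proj2 hP)) _.
have hp0 : 0 < (P 0)%:R :> R by rewrite ltr0n; case: hP.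
case hp: (P 0) (proj2 hP) => [//|p] _.
rewrite big_ord_recl /=.
have h0 : absmass (ravg b P 0) F <= 1.
  by have [hp1 _] := ravg_facts b 0 hP; apply: absmass_sch_le1 hp1 hF.
have h1 : \sum_(i < p) absmass (ravg b P (bump 0 i)) F <= p%:R * e.
  apply: le_trans (_ : \sum_(i < p) e <= _); last by rewrite sumr_const card_ord mulr_natl.
  apply: ler_sum => i _; rewrite /bump /= add1n.
  have [Q [hQs ->]] := RA_tail i hz hP; exact: hQ.
rewrite -hp.
have hp1 : (P 0)%:R = p.+1%:R :> R by rewrite hp.
rewrite mulrDr.
apply: lerD.
  by rewrite -[X in _ <= X]mulr1 ler_wpM2l // invr_ge0 ltW.
rewrite hp1 mulrC ler_pdivrMr ?ltr0n //.
apply: le_trans h1 _; rewrite mulrC ler_wpM2l // ler_nat; exact: leqnSn.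
Qed.

Lemma s_inj (s : nat -> O) a b : (forall n m, (0 < n)%N -> (n < m)%N -> olt (s n) (s m)) ->
  (0 < a)%N -> (0 < b)%N -> s a = s b -> a = b.
Proof.
move=> s2 ha hb e; case: (ltngtP a b) => // h.
  by have := s2 _ _ ha h; rewrite e => /olt_irr.
by have := s2 _ _ hb h; rewrite e => /olt_irr.
Qed.

Lemma B_lim g : is_limit g -> (forall b, olt b g -> Tprop b) -> Bprop g.
Proof.
move=> hl IH; have [s [s1 s2 s3 s4]] := lim_seq hl.
have hz : ~ is_zero g by move=> h; exact: zero_not_limit h hl.
exists 6; first by [].
move=> M hM; have [M1 hM1 hD1] := exists_dbl hM.
have hGM1 := infsub_good hM1 hM.
pose Q q := AllSub (fun Lq => forall n, (n < q)%N -> (0 < n)%N -> olt (s n) (beta g q) ->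
   PhiT (s n) (beta g q) ((q%:R)^-1) Lq).
have hQH : forall q N N', infsub N' N -> Q q N -> Q q N' by move=> q N N' h1 h2; exact: AllSub_hered h1 h2.
have hQL : forall q, Large (Q q).
  move=> q; apply: Large_fin => n hnq.
  case: (pselect ((0 < n)%N /\ olt (s n) (beta g q))) => [[hn hsn]|hno]; last first.
    move=> M' hM'; exists M'; first exact: infsub_refl (proj1 hM').
    by move=> L _ hn hsn; case: hno.
  have hq : (0 < q)%N by lia.
  have hbq : olt (beta g q) g by apply: olt_trans (s3 q); case: (s1 q hq).
  have hq0 : 0 < (q%:R)^-1 :> R by rewrite invr_gt0 ltr0n.
  move=> M' hM'; have [N' h1 h2] := IH _ hbq (s n) hsn _ hq0 M' hM'.
  exists N' => //; move=> L hL _ _; exact: h2 L hL.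
have [N hN hNQ] := diag hQH hQL hGM1.
exists N; first exact: infsub_trans hN hM1.
move=> L hLN F hF m.
have hGN := infsub_good hN hGM1.
have hL := infsub_good hLN hGN.
have hDL : Dbl L by apply: dbl_sub hLN (proj1 hGN) (dbl_sub hN (proj1 hGM1) hD1).
case: (inv_lim hl hF) => [hF0|[n [g' [hn hg' hFg hnx]]]].
  rewrite hF0 big1 // => i _; by rewrite /absmass big_nil.
have eg : g' = s n by apply: succ_unique hg' (s1 n hn).
rewrite eg in hFg.
set x := head 0%N F.
have hx : forall k, k \in F -> (x <= k)%N by move=> k; apply: sorted_head_le; exact: sch_sorted hF.
have hx0 : (0 < x)%N by lia.
set p := fun i => Lb g L i 0.
rewrite (split_sum m (fun i => absmass (ravg g L i) F) (fun i => (p i <= x)%N)).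
have -> : (6 : R) = 1 + (1 + 2 * 2) by lra.
apply: lerD; first exact: part1 (sch_uniq hF) hx.
pose Pb i := `[< beta g (p i) = s n >].
rewrite (split_sum m (fun i => if (p i <= x)%N then 0 else absmass (ravg g L i) F) Pb).
apply: lerD.
  apply: (@sum_le1 R m (fun i => if Pb i then if (p i <= x)%N then 0 else absmass (ravg g L i) F else 0)) => [i _|i j _ _].
    case: ifP => _; last by rewrite lexx ler01.
    case: ifP => _; first by rewrite lexx ler01.
    have [hpr _] := ravg_facts g i hL.
    by rewrite absmass_ge0 (absmass_sch_le1 hpr hF).
  rewrite /Pb; case: asboolP => hi; last by rewrite eqxx.
  case: asboolP => hj; last by rewrite eqxx.
  move=> _ _.
  have hpi : (0 < p i)%N by case: (Lb_good g i hL).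
  have hpj : (0 < p j)%N by case: (Lb_good g j hL).
  have e1 : s (p i) = s (p j).
    apply: (@succ_unique (s n)); [rewrite -hi| rewrite -hj]; exact: s1.
  have := s_inj s2 hpi hpj e1.
  move=> e2; exact: (incr_inj (Lb_incr hz hL) e2).
have -> : \sum_(i < m) (if Pb i then 0 else if (p i <= x)%N then 0 else absmass (ravg g L i) F) =
          \sum_(i < m) (if (p i <= x)%N then 0 else (if Pb i then 0 else absmass (ravg g L i) F)).
  by apply: eq_bigr => i _; case: (Pb i); case: (p i <= x)%N.
apply: le_trans (_ : 2 * 2 / x%:R <= _); last first.
  have hx1 : (x%:R)^-1 <= 1 :> R by rewrite invf_le1 ?ltr0n // ler1n.
  rewrite -[X in _ <= X]mulr1; apply: ler_wpM2l hx1; lra.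
apply: (@part2_geom g L x m _ (fun i => if Pb i then 0 else absmass (ravg g L i) F)) => //.
move=> i hi /=; rewrite /Pb; case: asboolP => hPi.
  by rewrite divr_ge0 ?ler0n.
have hGi := Lb_good g i hL.
have hpi : (0 < p i)%N by case: hGi.
have hsi := s1 _ hpi.
have hnlt : olt (s n) (beta g (p i)).
  have := s2 n (p i) hn (leq_ltn_trans hnx hi).
  move=> h; case: hsi => _ /(_ _ h) [e|//]; by case: hPi; rewrite e.
rewrite ravg_Lb // (A_lim hl hpi hsi) (A_succ _ hsi).
have [j hj] : exists j, p i = N j.
  by have [_ h] := infsub_trans (Lb_sub g i (proj1 hL)) hLN; apply: h.
have hbz : ~ is_zero (beta g (p i)) by move=> h; exact: h _ hnlt.
have he : 0 <= ((p i)%:R)^-1 :> R by rewrite invr_ge0 ler0n.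
have hQb : forall Q', infsub Q' (fun t => Lb g L i t.+1) -> forall F', schreier beta (s n) F' ->
    absmass (A (beta g (p i)) Q') F' <= ((p i)%:R)^-1.
  move=> Q' hQ' F' hF'.
  have hT := sub_tail (infsub_trans (Lb_sub g i (proj1 hL)) hLN) (proj1 hGN) hj.
  rewrite hj; apply: (hNQ j Q' (infsub_trans hQ' hT) n) => //; rewrite -hj //; exact: leq_ltn_trans hnx hi.
apply: le_trans (first_bound hbz hGi he hQb hFg) _.
rewrite -/(p i); lra.
Qed.

Lemma avg_each b P F (e : R) : Good P ->
  (forall t, (t < P 0)%N -> absmass (ravg b P t) F <= e) -> absmass (avgF b P) F <= e.
Proof.
move=> hP h; rewrite /avgF; apply: le_trans (absmass_avg _ _ (proj2 hP)) _.
have hp : 0 < (P 0)%:R :> R by rewrite ltr0n; case: hP.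
rewrite mulrC ler_pdivrMr //.
apply: le_trans (_ : \sum_(t < P 0) e <= _); last by rewrite sumr_const card_ord mulr_natr.
by apply: ler_sum => t _; apply: h.
Qed.

Lemma avg_sum b P F (C : R) : Good P ->
  \sum_(t < P 0) absmass (ravg b P t) F <= C -> absmass (avgF b P) F <= C / (P 0)%:R.
Proof.
move=> hP h; rewrite /avgF; apply: le_trans (absmass_avg _ _ (proj2 hP)) _.
by rewrite mulrC ler_pM2r // invr_gt0 ltr0n; case: hP.
Qed.

Lemma T_zero xi : is_zero xi -> Tprop xi.
Proof. by move=> hz zeta hzx; case: (hz _ hzx). Qed.

Lemma real_bound (C eps : R) : 0 < eps -> exists K : nat, C / eps < K%:R.
Proof.
move=> he; exists (Num.Def.archi_bound (`|C| / eps)).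
apply: le_lt_trans (archi_boundP _); last by rewrite divr_ge0 // ltW.
by rewrite ler_pM2r ?invr_gt0 // ler_norm.
Qed.

Lemma T_succ xi b : is_succ_of b xi -> Tprop b -> Bprop b -> Tprop xi.
Proof.
move=> hs hT [C hC hLB] zeta hzx eps heps M hM.
have hs' := hs; case: hs' => hbx hpred.
case: (hpred _ hzx) => [ezb|hzb].
- have [K hK] := real_bound C heps.
  have [M' hM' hge] := exists_ge K.+1 hM.
  have hGM' := infsub_good hM' hM.
  have [N hN hPN] := hLB M' hGM'.
  exists N; first exact: infsub_trans hN hM'.
  move=> L hLN F hF; rewrite (A_succ _ hs).
  have hL := infsub_good hLN (infsub_good hN hGM').
  have hLK : (K < L 0)%N.
    have [_ h] := infsub_trans hLN hN; have [j ->] := h 0%N; exact: hge.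
  apply: le_trans (avg_sum hL _) _.
    by apply: (hPN L hLN); rewrite -ezb.
  have hq : 0 < (L 0)%:R :> R by rewrite ltr0n; case: hL.
  rewrite ler_pdivrMr //.
  have : K%:R <= (L 0)%:R :> R by rewrite ler_nat ltnW.
  move: hK; rewrite ltr_pdivrMr // => hK h.
  have h2 : K%:R * eps <= (L 0)%:R * eps by rewrite ler_wpM2r // ltW.
  lra.
- have [N hN hPN] := hT zeta hzb eps heps M hM.
  exists N => // L hLN F hF; rewrite (A_succ _ hs).
  have hL := infsub_good hLN (infsub_good hN hM).
  apply: avg_each => // t _.
  have [Q [hQ ->]] := RA b t (proj1 hL).
  exact: (hPN Q (infsub_trans hQ hLN)).
Qed.

Lemma T_lim xi : is_limit xi -> (forall b, olt b xi -> Tprop b /\ Bprop b) -> Tprop xi.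
Proof.
move=> hl IH zeta hzx eps heps M hM.
have [s [s1 s2 s3 s4]] := lim_seq hl.
have [n0 hn0 hzn0] := s4 zeta hzx.
have [C hC hLB] := (IH zeta hzx).2.
have [K hK] := real_bound (C + 2) heps.
have [M' hM' hge] := exists_ge (maxn K n0) hM.
have hGM' := infsub_good hM' hM.
have [M'' hM'' hPB] := hLB M' hGM'.
have hGM'' := infsub_good hM'' hGM'.
have heps2 : 0 < eps / 2 by rewrite divr_gt0.
pose Q q := AllSub (fun Lq => (0 < q)%N -> olt zeta (beta xi q) ->
   PhiT zeta (beta xi q) (eps / 2) Lq).
have hQH : forall q N N', infsub N' N -> Q q N -> Q q N' by move=> q N N' h1 h2; exact: AllSub_hered h1 h2.
have hQL : forall q, Large (Q q).
  move=> q M0 hM0.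
  case: (pselect ((0 < q)%N /\ olt zeta (beta xi q))) => [[hq hzq]|hno]; last first.
    exists M0; first exact: infsub_refl (proj1 hM0).
    by move=> L _ hq hzq; case: hno.
  have hbq : olt (beta xi q) xi by apply: olt_trans (s3 q); case: (s1 q hq).
  have [N' h1 h2] := (IH _ hbq).1 zeta hzq _ heps2 M0 hM0.
  by exists N' => // L hL _ _; exact: h2 L hL.
have [N hN hNQ] := diag hQH hQL hGM''.
exists N; first exact: infsub_trans hN (infsub_trans hM'' hM').
move=> L hLN F hF.
have hGN := infsub_good hN hGM''.
have hL := infsub_good hLN hGN.
set q := L 0.
have hqK : (maxn K n0 <= q)%N.
  have [_ h] := infsub_trans hLN (infsub_trans hN hM''); have [j hj] := h 0%N.
  rewrite /q hj; exact: hge.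
have hq : (0 < q)%N by case: hL.
have hsq := s1 q hq.
rewrite (A_lim hl hq hsq) (A_succ _ hsq).
have hzq : olt zeta (s q).
  case: (ltngtP n0 q) => [h|h|<-] //; first exact: olt_trans hzn0 (s2 _ _ hn0 h).
  move: hqK; rewrite geq_max; lia.
have hqR : 0 < q%:R :> R by rewrite ltr0n.
have hKq : K%:R <= q%:R :> R by rewrite ler_nat; move: hqK; rewrite geq_max => /andP[].
move: hK; rewrite ltr_pdivrMr // => hK.
have h2 : K%:R * eps <= q%:R * eps by rewrite ler_wpM2r // ltW.
have hCq : C + 2 < eps * q%:R by lra.
case: hsq => _ /(_ _ hzq) [ezb|hzb].
- apply: le_trans (@avg_sum _ L F C hL _) _.
    rewrite -ezb; exact: (hPB L (infsub_trans hLN hN)) hF _.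
  rewrite ler_pdivrMr //; lra.
- have [j hj] : exists j, q = N j by have [_ h] := hLN; apply: h.
  have hbz : ~ is_zero (beta xi q) by move=> h; exact: h _ hzb.
  have he : 0 <= eps / 2 by apply: ltW.
  have hQb : forall Q', infsub Q' (fun t => L t.+1) -> forall F', schreier beta zeta F' ->
      absmass (A (beta xi q) Q') F' <= eps / 2.
    move=> Q' hQ' F' hF'.
    have hT := sub_tail hLN (proj1 hGN) hj.
    rewrite hj; apply: (hNQ j Q' (infsub_trans hQ' hT)) => //; rewrite -hj //.
  apply: le_trans (first_bound hbz hL he hQb hF) _.
  rewrite -/q.
  have : q%:R^-1 <= eps / 2.
    rewrite -[X in X <= _]mul1r ler_pdivrMr //; lra.
  lra.
Qed.

Lemma main_all xi : Tprop xi /\ Bprop xi.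
Proof.
elim: (olt_wf xi) => {}xi _ IH.
case: (ord_cases xi) => [hz|[b hs]|hl].
- by split; [exact: T_zero|exact: B_zero].
- have hb : olt b xi by case: hs.
  have [hT hB] := IH b hb.
  by split; [exact: T_succ hs hT hB|exact: B_succ hs hB].
- split; first exact: T_lim.
  by apply: B_lim => // b hb; case: (IH b hb).
Qed.

End Aux.

Unset Implicit Arguments.
Set Strict Implicit.

Theorem proposition2p15 (O : omega1) (beta : O -> nat -> O)
  (hbeta : fundamental_seqs beta) (R : realType)
  (M : nat -> nat) (hM : infsubN M) (eps : R) (heps : 0 < eps)
  (zeta xi : O) (hzx : olt zeta xi) :
  exists N : nat -> nat, infsub N M /\
    forall L : nat -> nat, infsub L N ->
      forall n : nat, snorm beta zeta (ravg beta R xi L n) < eps.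
Proof.
have [hT _] := main_all hbeta R xi.
have heps2 : 0 < eps / 2 by rewrite divr_gt0.
have hGM : Good M by exact: hM.
have [N hN hP] := hT zeta hzx (eps / 2) heps2 M hGM.
exists N; split => // L hL n.
have hGL := infsub_good hL (infsub_good hN hGM).
have [Q [hQ ->]] := RA beta R xi n (proj1 hGL).
apply: le_lt_trans (_ : eps / 2 < eps); last lra.
apply: (snorm_le hbeta) => F hF; exact: hP Q (infsub_trans hQ hL) F hF.
Qed.
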